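(* Let $V_1,V_2$ be vertex operator algebras, $W$ a weak $V_1\otimes V_2$-module and $W_2$ a finitely generated weak $V_2$-module. Then $\mathrm{Hom}_{V_2}(W_2,W)$ is a weak $V_1$-module with $(Y(v_{(1)},x)f)(w_{(2)})=Y(v_{(1)}\otimes\mathbf 1,x)f(w_{(2)})$ for $v_{(1)}\in V_1$, $f\in\mathrm{Hom}_{V_2}(W_2,W)$, $w_{(2)}\in W_2$. Moreover, if $W_2$ is an (ordinary) $V_2$-module and $W$ is an (ordinary) $V_1\otimes V_2$-module on which $L^1(0)$ or $L^2(0)$ acts semisimply, then $\mathrm{Hom}_{V_2}(W_2,W)$ is an (ordinary) $V_1$-module.
   Context: Weak modules for a vertex operator algebra $U$ with vacuum $\mathbf 1$: vector space $M$ with $Y_M:U\to(\mathrm{End}\,M)[[x,x^{-1}]]$ such that $Y_M(u,x)m\in M((x))$, $Y_M(\mathbf 1,x)=\mathrm{id}$, and the Jacobi identity $x_0^{-1}\delta(\frac{x_1-x_2}{x_0})Y_M(u,x_1)Y_M(v,x_2)-x_0^{-1}\delta(\frac{x_2-x_1}{-x_0})Y_M(v,x_2)Y_M(u,x_1)=x_2^{-1}\delta(\frac{x_1-x_0}{x_2})Y_M(Y(u,x_0)v,x_2)$ holds, where $\delta(x)=\sum_{n\in\mathbb Z}x^n$ and binomials are expanded in nonnegative powers of the second variable. An (ordinary) module is a weak module on which $L(0)$ acts semisimply, $M=\coprod_{h\in\mathbb C}M_{(h)}$, with $\dim M_{(h)}<\infty$ and $M_{(h+n)}=0$ for all sufficiently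 negative integers $n$. $V_1\otimes V_2$ is the tensor product vertex operator algebra; $V_1$ and $V_2$ are identified with the subalgebras $V_1\otimes\mathbf 1$ and $\mathbf 1\otimes V_2$, so that a weak $V_1\otimes V_2$-module is a weak $V_1$-module and a weak $V_2$-module with commuting actions. $L^1(n)$ and $L^2(n)$ denote the Virasoro operators from the Virasoro elements of $V_1$ and $V_2$; $L^1(n)+L^2(n)$ are those of $V_1\otimes V_2$. A weak $V_2$-module is finitely generated if it is generated by a finite-dimensional subspace. *)

(* Defs.v *)
From HB Require Import structures.
From mathcomp Require Import all_boot all_order all_algebra.
From mathcomp Require Import functions.
Set Implicit Arguments. Unset Strict Implicit. Unset Printing Implicit Defensive.
Import Order.TTheory GRing.Theory Num.Theory.
Local Open Scope ring_scope.

(* A field-valued "vertex operator" on a space M is encoded by its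
   modes: [Y u n m] is u_n m, where Y(u,x) = \sum_{n \in Z} u_n x^{-n-1}. *)

Section Defs.
Variable K : numClosedFieldType.

Definition binz (l : int) (i : nat) : K :=
  (\prod_(j < i) (l%:~R - j%:R)) / (i`!)%:R.

Definition subspace (M : lmodType K) (S : M -> Prop) : Prop :=
  S 0 /\ forall (a : K) (x y : M), S x -> S y -> S (a *: x + y).

Definition fin_dim (M : lmodType K) (S : M -> Prop) : Prop :=
  exists s : seq M, forall m, S m ->
    exists c : 'I_(size s) -> K, m = \sum_(i < size s) c i *: s`_i.

Section WeakModule.
Variables (V : lmodType K) (vac : V) (YV : V -> int -> V -> V).

(* The Jacobi identity, written through its coefficients (Borcherds identity):
   coefficient of x0^{-l-1} x1^{-m-1} x2^{-n-1}:
   \sum_{i>=0} (-1)^i binom(l,i) (u_{m+l-i} v_{n+i} w - (-1)^l v_{n+l-i} u_{m+i} w)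
     = \sum_{i>=0} binom(m,i) (u_{l+i} v)_{m+n-i} w.
   All three sums have finitely many nonzero terms (by truncation), so they are
   equal iff all sufficiently long partial sums agree. *)
Definition jacobi_at (M : lmodType K) (Y : V -> int -> M -> M)
    (u v : V) (w : M) (l m n : int) : Prop :=
  exists N0 : nat, forall N : nat, (N0 <= N)%N ->
    \sum_(i < N) ((-1) ^+ i * binz l i) *:
        (Y u (m + l - i%:Z) (Y v (n + i%:Z) w)
         - (-1) ^+ `|l|%N *: Y v (n + l - i%:Z) (Y u (m + i%:Z) w))
    = \sum_(i < N) binz m i *: Y (YV u (l + i%:Z) v) (m + n - i%:Z) w.

Definition weak_module_on (M : lmodType K) (S : M -> Prop)
    (Y : V -> int -> M -> M) : Prop :=
  subspace S /\
  (forall u n w, S w -> S (Y u n w)) /\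
  (forall u n (a : K) w w', S w -> S w' ->
      Y u n (a *: w + w') = a *: Y u n w + Y u n w') /\
  (forall u u' n (a : K) w, S w ->
      Y (a *: u + u') n w = a *: Y u n w + Y u' n w) /\
  (forall u w, S w -> exists N : int, forall n, N <= n -> Y u n w = 0) /\
  (forall n w, S w -> Y vac n w = if n == -1 then w else 0) /\
  (forall u v w l m n, S w -> jacobi_at Y u v w l m n).

Definition weak_module (M : lmodType K) (Y : V -> int -> M -> M) : Prop :=
  weak_module_on (fun _ => True) Y.

Definition fin_generated (M : lmodType K) (Y : V -> int -> M -> M) : Prop :=
  exists s : seq M, forall S : M -> Prop,
    subspace S ->
    (forall u n w, S w -> S (Y u n w)) ->
    (forall w, w \in s -> S w) -> forall w, S w.
End WeakModule.

Definition semisimple_on (M : lmodType K) (S : M -> Prop) (T : M -> M) : Prop :=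
  forall m, S m -> exists s : seq (K * M),
    (forall p, p \in s -> S p.2 /\ T p.2 = p.1 *: p.2) /\
    m = \sum_(p <- s) p.2.

Definition graded_on (M : lmodType K) (S : M -> Prop) (L0 : M -> M) : Prop :=
  [/\ semisimple_on S L0,
      (forall h : K, fin_dim (fun m => S m /\ L0 m = h *: m))
    & (forall h : K, exists N : int, forall n : int, n <= N ->
          forall m, S m -> L0 m = (h + n%:~R) *: m -> m = 0)].

Section VOA.
Variables (V : lmodType K) (vac om : V) (YV : V -> int -> V -> V) (c : K).

Definition vir (n : int) : V -> V := YV om (n + 1).

Definition is_VOA : Prop :=
  weak_module vac YV YV /\
  ((forall v n, 0 <= n -> YV v n vac = 0) /\ (forall v, YV v (-1) vac = v)) /\
  (forall (m n : int) v,
      vir m (vir n v) - vir n (vir m v)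
      = (m - n)%:~R *: vir (m + n) v
        + ((if m + n == 0 then (m ^+ 3 - m)%:~R / 12%:R else 0) * c) *: v) /\
  (forall v n w, YV (vir (-1) v) n w = (- n%:~R) *: YV v (n - 1) w) /\
  vir 0 om = 2%:R *: om /\
    [/\ (forall v, exists s : seq (int * V),
              (forall p, p \in s -> vir 0 p.2 = p.1%:~R *: p.2) /\
              v = \sum_(p <- s) p.2),
          (forall n : int, fin_dim (fun v => vir 0 v = n%:~R *: v))
        & (exists N : int, forall n : int, n <= N ->
              forall v, vir 0 v = n%:~R *: v -> v = 0)].

Definition module_on (M : lmodType K) (S : M -> Prop)
    (Y : V -> int -> M -> M) : Prop :=
  weak_module_on vac YV S Y /\ graded_on S (Y om 1).
End VOA.

(* weak V1 (x) V2-module: a weak V1-module and a weak V2-module with commuting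
   actions (V_i identified with the subalgebras V1 (x) 1 and 1 (x) V2) *)
Definition weak_tensor_module (V1 V2 : lmodType K) (vac1 : V1) (vac2 : V2)
    (Y1 : V1 -> int -> V1 -> V1) (Y2 : V2 -> int -> V2 -> V2)
    (W : lmodType K) (YW1 : V1 -> int -> W -> W) (YW2 : V2 -> int -> W -> W) :=
  [/\ weak_module vac1 Y1 YW1, weak_module vac2 Y2 YW2
    & forall a b m n w, YW1 a m (YW2 b n w) = YW2 b n (YW1 a m w)].

Definition HomV (V : lmodType K) (W2 W : lmodType K)
    (Y2 : V -> int -> W2 -> W2) (Y : V -> int -> W -> W) (f : W2 -> W) : Prop :=
  (forall (a : K) x y, f (a *: x + y) = a *: f x + f y) /\
  (forall v n w, f (Y2 v n w) = Y v n (f w)).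

Definition Yhom (V W2 W : lmodType K) (Y : V -> int -> W -> W)
    (v : V) (n : int) (f : W2 -> W) : W2 -> W := fun w => Y v n (f w).
End Defs.

(* Main.v *)
Require Import Defs.
From HB Require Import structures.
From mathcomp Require Import all_boot all_order all_algebra.
From mathcomp Require Import functions zify.
From Stdlib Require Classical_Prop List.
Set Implicit Arguments. Unset Strict Implicit. Unset Printing Implicit Defensive.
Import Order.TTheory GRing.Theory Num.Theory.
Local Open Scope ring_scope.

Definition islin (K : numClosedFieldType) (M N : lmodType K) (F : M -> N) :=
  forall (a : K) x y, F (a *: x + y) = a *: F x + F y.

Lemma lin0 (K : numClosedFieldType) (M N : lmodType K) (F : M -> N) :
  islin F -> F 0 = 0.
Proof.
move=> h; have := h (-1) 0 0.
by rewrite scaler0 addr0 scaleN1r addNr.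
Qed.

Lemma linD (K : numClosedFieldType) (M N : lmodType K) (F : M -> N) :
  islin F -> forall x y, F (x + y) = F x + F y.
Proof. by move=> h x y; have := h 1 x y; rewrite !scale1r. Qed.

Lemma linZ (K : numClosedFieldType) (M N : lmodType K) (F : M -> N) :
  islin F -> forall a x, F (a *: x) = a *: F x.
Proof. by move=> h a x; have := h a x 0; rewrite !addr0 (lin0 h) addr0. Qed.

Lemma linN (K : numClosedFieldType) (M N : lmodType K) (F : M -> N) :
  islin F -> forall x, F (- x) = - F x.
Proof. by move=> h x; rewrite -scaleN1r (linZ h) scaleN1r. Qed.

Lemma linB (K : numClosedFieldType) (M N : lmodType K) (F : M -> N) :
  islin F -> forall x y, F (x - y) = F x - F y.
Proof. by move=> h x y; rewrite (linD h) (linN h). Qed.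

Lemma lin_sum (K : numClosedFieldType) (M N : lmodType K) (F : M -> N)
  (I : Type) (r : seq I) (P : pred I) (G : I -> M) :
  islin F -> F (\sum_(i <- r | P i) G i) = \sum_(i <- r | P i) F (G i).
Proof.
move=> h; elim/big_rec2: _ => [|i y1 y2 _ <-]; first exact: lin0.
exact: linD.
Qed.

Lemma subspace_sum (K : numClosedFieldType) (M : lmodType K) (S : M -> Prop)
  (I : eqType) (r : seq I) (G : I -> M) :
  subspace S -> (forall i, i \in r -> S (G i)) -> S (\sum_(i <- r) G i).
Proof.
move=> [S0 Sl]; elim: r => [|i r IH] H; first by rewrite big_nil.
rewrite big_cons -[G i]scale1r; apply: Sl; first by apply: H; rewrite mem_head.
by apply: IH => j hj; apply: H; rewrite in_cons hj orbT.
Qed.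

Definition span (K : numClosedFieldType) (M : lmodType K) (t : seq M) (y : M) :=
  exists c : 'I_(size t) -> K, y = \sum_(i < size t) c i *: t`_i.

Lemma span_nil (K : numClosedFieldType) (M : lmodType K) (y : M) :
  span [::] y -> y = 0.
Proof. by case=> c ->; rewrite big_ord0. Qed.

Lemma span_lin (K : numClosedFieldType) (M : lmodType K) (t : seq M) a x y :
  span t x -> span t y -> span t (a *: x + y).
Proof.
case=> c -> [d ->]; exists (fun i => a * c i + d i).
rewrite scaler_sumr -big_split /=; apply: eq_bigr => i _.
by rewrite scalerDl scalerA.
Qed.

Lemma span0 (K : numClosedFieldType) (M : lmodType K) (t : seq M) : span t 0.
Proof. by exists (fun _ => 0); rewrite big1 // => i _; rewrite scale0r. Qed.

Lemma span_consE (K : numClosedFieldType) (M : lmodType K) (t0 : M) t y :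
  span (t0 :: t) y -> exists d r, span t r /\ y = d *: t0 + r.
Proof.
case=> c ->; rewrite big_ord_recl /=.
by exists (c ord0), (\sum_(i < size t) c (lift ord0 i) *: t`_i); split => //;
  exists (fun i => c (lift ord0 i)).
Qed.

Lemma span_consI (K : numClosedFieldType) (M : lmodType K) (t0 : M) t y d r :
  span t r -> y = d *: t0 + r -> span (t0 :: t) y.
Proof.
case=> c -> ->.
exists (fun i : 'I_(size t).+1 => if unlift ord0 i is Some j then c j else d).
rewrite big_ord_recl /= unlift_none; congr (_ + _).
by apply: eq_bigr => i _; rewrite liftK.
Qed.

Lemma span_fin_dim (K : numClosedFieldType) (M : lmodType K) (t : seq M)
  (S : M -> Prop) : (forall x, S x -> span t x) -> fin_dim S.
Proof. by move=> h; exists t. Qed.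

Definition eigsum (K : numClosedFieldType) (M : lmodType K) (T : M -> M)
  (P : K -> Prop) (x : M) :=
  exists s : seq (K * M), (forall p, p \in s -> P p.1 /\ T p.2 = p.1 *: p.2)
    /\ x = \sum_(p <- s) p.2.

Definition Qop (K : numClosedFieldType) (M : lmodType K) (T : M -> M)
  (s : seq K) (x : M) := foldr (fun mu y => T y - mu *: y) x s.

Lemma Qop_lin (K : numClosedFieldType) (M : lmodType K) (T : M -> M) s :
  islin T -> islin (Qop T s).
Proof.
move=> hT a x y; elim: s => [//|mu s IH] /=.
rewrite IH hT; rewrite scalerDr !scalerA mulrC -scalerA.
rewrite opprD addrACA -scalerBr; congr (_ + _).
Qed.

Lemma Qop_eig (K : numClosedFieldType) (M : lmodType K) (T : M -> M) s l y :
  islin T -> T y = l *: y ->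
  Qop T s y = (\prod_(mu <- s) (l - mu)) *: y.
Proof.
move=> hT hy; elim: s => [|mu s IH] /=; first by rewrite big_nil scale1r.
rewrite IH (linZ hT) hy big_cons scalerA scalerA -scalerBl; congr (_ *: _).
by rewrite mulrBl mulrC.
Qed.

Lemma Qop_comm (K : numClosedFieldType) (M : lmodType K) (T A : M -> M) s x :
  islin A -> (forall x, A (T x) = T (A x)) -> A (Qop T s x) = Qop T s (A x).
Proof.
move=> hA hc; elim: s => [//|mu s IH] /=.
by rewrite (linB hA) (linZ hA) hc IH.
Qed.

Definition Pop (K : numClosedFieldType) (M : lmodType K) (T : M -> M)
  (L : seq K) (l : K) (x : M) :=
  (\prod_(mu <- rem l L) (l - mu))^-1 *: Qop T (rem l L) x.

Lemma Pop_lin (K : numClosedFieldType) (M : lmodType K) (T : M -> M) L l :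
  islin T -> islin (Pop T L l).
Proof.
move=> hT a x y; rewrite /Pop (Qop_lin _ hT) scalerDr !scalerA mulrC //.
Qed.

Lemma Pop_comm (K : numClosedFieldType) (M : lmodType K) (T A : M -> M) L l x :
  islin A -> (forall x, A (T x) = T (A x)) -> A (Pop T L l x) = Pop T L l (A x).
Proof. by move=> hA hc; rewrite /Pop (linZ hA) Qop_comm. Qed.

Lemma Pop_eig (K : numClosedFieldType) (M : lmodType K) (T : M -> M) L l mu y :
  islin T -> uniq L -> mu \in L -> T y = mu *: y ->
  Pop T L l y = if mu == l then y else 0.
Proof.
move=> hT uL muL hy; rewrite /Pop (Qop_eig _ hT hy).
case: eqVneq => [->|ne].
  rewrite scalerA mulVf ?scale1r //; rewrite prodf_seq_neq0.
  apply/allP => nu hnu /=; rewrite subr_eq0; apply/eqP => e.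
  by move: hnu; rewrite -e mem_rem_uniqF.
rewrite [\prod_(_ <- _) (mu - _)](big_rem mu) ?subrr /=.
  by rewrite mul0r scale0r scaler0.
exact: rem_mem ne muL.
Qed.

Lemma lagrange (K : numClosedFieldType) (M : lmodType K) (T : M -> M) L x :
  islin T -> uniq L -> eigsum T (fun mu => mu \in L) x ->
  x = \sum_(l <- L) Pop T L l x /\
  forall l, l \in L -> T (Pop T L l x) = l *: Pop T L l x.
Proof.
move=> hT uL [s [hs ->]].
have hP l : islin (Pop T L l) by apply: Pop_lin.
split.
  symmetry.
  under eq_bigr => l _ do rewrite (lin_sum _ _ _ (hP l)).
  rewrite exchange_big /=; apply: eq_big_seq => p ps.
  have [pL hp] := hs p ps.
  under eq_bigr do rewrite (Pop_eig _ hT uL pL hp).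
  rewrite (big_rem p.1) //= eqxx big_seq big1 ?addr0 // => l hl.
  rewrite ifN //; apply/eqP => e; move: hl; rewrite -e mem_rem_uniqF //.
move=> l lL.
rewrite /Pop (linZ hT) scalerA mulrC -scalerA; congr (_ *: _).
apply/eqP; rewrite -subr_eq0; apply/eqP.
change (Qop T (l :: rem l L) (\sum_(p <- s) p.2) = 0).
rewrite (lin_sum _ _ _ (Qop_lin _ hT)) big_seq big1 // => p ps.
have [pL hp] := hs p ps.
rewrite (Qop_eig _ hT hp) (big_rem p.1) /=.
  by rewrite subrr mul0r scale0r.
rewrite in_cons; case: eqVneq => //= ne; exact: rem_mem ne pL.
Qed.

Lemma eigsum0 (K : numClosedFieldType) (M : lmodType K) (T : M -> M) P :
  eigsum T P 0.
Proof. by exists [::]; split => //; rewrite big_nil. Qed.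

Lemma eigsum_add (K : numClosedFieldType) (M : lmodType K) (T : M -> M) P x y :
  eigsum T P x -> eigsum T P y -> eigsum T P (x + y).
Proof.
move=> [s1 [h1 ->]] [s2 [h2 ->]]; exists (s1 ++ s2); split; last by rewrite big_cat.
by move=> p; rewrite mem_cat => /orP [/h1|/h2].
Qed.

Lemma eigsum_map (K : numClosedFieldType) (M : lmodType K) (T A : M -> M) P x :
  islin A -> (forall x, A (T x) = T (A x)) -> eigsum T P x -> eigsum T P (A x).
Proof.
move=> hA hc [s [hs ->]]; exists [seq (p.1, A p.2) | p <- s]; split.
  move=> q /mapP [p ps ->] /=; have [h1 h2] := hs p ps; split => //.
  by rewrite -hc h2 (linZ hA).
by rewrite big_map (lin_sum _ _ _ hA).
Qed.

Lemma eigsum_scale (K : numClosedFieldType) (M : lmodType K) (T : M -> M) P a x :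
  islin T -> eigsum T P x -> eigsum T P (a *: x).
Proof.
move=> hT; apply: eigsum_map => [b u v|u]; first by rewrite scalerDr !scalerA mulrC.
by rewrite (linZ hT).
Qed.

Lemma eigsum_mono (K : numClosedFieldType) (M : lmodType K) (T : M -> M)
  (P P' : K -> Prop) x :
  (forall mu, P mu -> P' mu) -> eigsum T P x -> eigsum T P' x.
Proof.
move=> hP [s [hs ->]]; exists s; split => // p ps; have [h1 h2] := hs p ps.
by split => //; apply: hP.
Qed.

Lemma eigsum_sum (K : numClosedFieldType) (M : lmodType K) (T : M -> M) P
  (I : eqType) (r : seq I) (G : I -> M) :
  (forall i, i \in r -> eigsum T P (G i)) -> eigsum T P (\sum_(i <- r) G i).
Proof.
elim: r => [|i r IH] H; first by rewrite big_nil; apply: eigsum0.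
rewrite big_cons; apply: eigsum_add; first by apply: H; rewrite mem_head.
by apply: IH => j hj; apply: H; rewrite in_cons hj orbT.
Qed.

Lemma eigsum_eig (K : numClosedFieldType) (M : lmodType K) (T : M -> M)
  (P : K -> Prop) mu y : T y = mu *: y -> P mu -> eigsum T P y.
Proof.
move=> hy hP; exists [:: (mu, y)]; split; last by rewrite big_seq1.
by move=> p; rewrite inE => /eqP -> .
Qed.

Lemma eig_split (K : numClosedFieldType) (M : lmodType K) (T1 T2 : M -> M) mu x :
  islin T1 -> islin T2 -> (forall w, T1 (T2 w) = T2 (T1 w)) ->
  T2 x = mu *: x -> eigsum (fun w => T1 w + T2 w) (fun _ => True) x ->
  eigsum T1 (fun _ => True) x.
Proof.
move=> h1 h2 hc hx [s [hs hxs]].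
set T := fun w => T1 w + T2 w.
have hT : islin T.
  by move=> a u v; rewrite /T h1 h2 scalerDr addrACA.
set L := undup [seq p.1 | p <- s].
have : eigsum T (fun l => l \in L) x.
  exists s; split => // p ps; have [_ hp] := hs p ps; split => //.
  by rewrite mem_undup; apply: map_f.
move=> /(lagrange hT (undup_uniq _)) [hx' hl]; rewrite {1}hx'.
apply: eigsum_sum => l lL.
apply: (eigsum_eig (mu := l - mu)) => //.
have e2 : T2 (Pop T L l x) = mu *: Pop T L l x.
  rewrite (Pop_comm _ _ _ h2); first by rewrite hx (linZ (Pop_lin _ _ hT)).
  by move=> w; rewrite /T (linD h2) hc.
have e : T1 (Pop T L l x) + T2 (Pop T L l x) = l *: Pop T L l x.
  exact: hl.
rewrite e2 in e.
by rewrite scalerBl -e addrK.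
Qed.

Lemma fin_dim_crit (K : numClosedFieldType) (M N : lmodType K) (X : eqType)
  (phi : X -> M -> N) (I : seq X) :
  forall S : M -> Prop, subspace S -> (forall i, i \in I -> islin (phi i)) ->
  (forall i, i \in I -> exists t, forall x, S x -> span t (phi i x)) ->
  (forall x, S x -> (forall i, i \in I -> phi i x = 0) -> x = 0) -> fin_dim S.
Proof.
elim: I => [|i I IH] S hS hlin hsp hker.
  exists [::] => m Sm; exists (fun _ => 0); rewrite big_ord0.
  by apply: hker.
have hli : islin (phi i) by apply: hlin; rewrite mem_head.
have [t ht] := hsp i (mem_head _ _).
suff: forall t (S' : M -> Prop), subspace S' ->
    (forall x, S' x -> span t (phi i x)) ->
    (forall j, j \in I -> exists t', forall x, S' x -> span t' (phi j x)) ->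
    (forall x, S' x -> phi i x = 0 -> (forall j, j \in I -> phi j x = 0) -> x = 0) ->
    fin_dim S'.
  move=> H; apply: (H t) => //.
    by move=> j jI; apply: hsp; rewrite in_cons jI orbT.
  move=> x Sx h0 hj; apply: hker => // j; rewrite in_cons => /orP [/eqP ->|]//.
  exact: hj.
elim=> [|t0 t' IHt] S' hS' ht' hsp' hker'.
  apply: IH => //.
    by move=> j jI; apply: hlin; rewrite in_cons jI orbT.
  by move=> x Sx hj; apply: hker' => //; apply: span_nil; apply: ht'.
case: (Classical_Prop.classic (forall x, S' x -> span t' (phi i x))) => [hall|hnot].
  exact: IHt.
have [x0 [Sx0 nx0]] : exists x0, S' x0 /\ ~ span t' (phi i x0).
  apply: Classical_Prop.NNPP => hn; apply: hnot => x Sx.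
  apply: Classical_Prop.NNPP => hs; apply: hn; by exists x.
have [c [r0 [hr0 e0]]] := span_consE (ht' x0 Sx0).
have c0 : c != 0.
  by apply/eqP => c0; apply: nx0; rewrite e0 c0 scale0r add0r.
pose S2 := fun x => S' x /\ span t' (phi i x).
have hS2 : subspace S2.
  split; first by split; [exact: hS'.1 | rewrite (lin0 hli); exact: span0].
  move=> a x y [Sx sx] [Sy sy]; split; first exact: hS'.2.
  by rewrite hli; apply: span_lin.
have [u hu] : fin_dim S2.
  apply: IHt => //; first by move=> x [].
    by move=> j jI; have [t2 h2] := hsp' j jI; exists t2 => x [Sx _]; apply: h2.
  by move=> x [Sx _]; apply: hker'.
exists (x0 :: u) => x Sx.
have [d [r [hr e]]] := span_consE (ht' x Sx).
have S2y : S2 (x - (d / c) *: x0).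
  split.
    by rewrite addrC -scaleNr; apply: hS'.2.
  rewrite (linB hli) (linZ hli) e e0.
  have -> : d *: t0 + r - (d / c) *: (c *: t0 + r0) = (- (d / c)) *: r0 + r.
    rewrite scalerDr scalerA divfK // scaleNr opprD addrA (addrC (d *: t0)).
    by rewrite addrK addrC.
  exact: span_lin.
have [cu hcu] := hu _ S2y.
apply: (@span_consI _ _ _ _ _ (d / c) (x - (d / c) *: x0)).
  by exists cu.
by rewrite addrC subrK.
Qed.

Lemma seq_max (T : eqType) (P : nat -> T -> Prop) (s : seq T) :
  (forall k k' x, (k <= k')%N -> P k x -> P k' x) ->
  (forall x, x \in s -> exists k, P k x) -> exists k, forall x, x \in s -> P k x.
Proof.
move=> hm; elim: s => [|x s IH] h; first by exists 0%N.
have [k1 h1] := h x (mem_head _ _).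
have [k2 h2] : exists k, forall y, y \in s -> P k y.
  by apply: IH => y hy; apply: h; rewrite in_cons hy orbT.
exists (maxn k1 k2) => y; rewrite in_cons => /orP [/eqP ->|hy].
  by apply: hm h1; exact: leq_maxl.
by apply: hm (h2 y hy); exact: leq_maxr.
Qed.

Lemma sum_stab (M : nmodType) (F : nat -> M) T0 :
  (forall i, (T0 <= i)%N -> F i = 0) ->
  forall N, (T0 <= N)%N -> \sum_(i < N) F i = \sum_(i < T0) F i.
Proof.
move=> hF N hN; rewrite -!(big_mkord xpredT F) (big_cat_nat (leq0n T0) hN) /=.
rewrite [X in _ + X]big_nat_cond [X in _ + X]big1 ?addr0 // => i /andP [/andP [hi _] _]; exact: hF.
Qed.

Lemma fapp_lin (K : numClosedFieldType) (T : Type) (N : lmodType K) (a : K)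
  (f g : T -> N) x : (a *: f + g) x = a *: f x + g x.
Proof. by []. Qed.

Lemma fapp0 (K : numClosedFieldType) (T : Type) (N : lmodType K) x :
  (0 : T -> N) x = 0.
Proof. by []. Qed.

Lemma fappZ (K : numClosedFieldType) (T : Type) (N : lmodType K) (a : K)
  (f : T -> N) x : (a *: f) x = a *: f x.
Proof. by []. Qed.

Lemma collect (K : numClosedFieldType) (M : lmodType K) (Tw : M -> M)
  (T : eqType) (s : seq T) (F : T -> M) :
  (forall x, x \in s -> eigsum Tw (fun _ => True) (F x)) ->
  exists L : seq K, forall x, x \in s -> eigsum Tw (fun mu => mu \in L) (F x).
Proof.
elim: s => [|x s IH] h; first by exists [::].
have [L' hL'] : exists L : seq K, forall y, y \in s -> eigsum Tw (fun mu => mu \in L) (F y).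
  by apply: IH => y hy; apply: h; rewrite in_cons hy orbT.
have [sx [hsx ex]] := h x (mem_head _ _).
exists ([seq p.1 | p <- sx] ++ L') => y; rewrite in_cons => /orP [/eqP ->|hy].
  exists sx; split => // p ps; have [_ hp] := hsx p ps; split => //.
  by rewrite mem_cat map_f.
refine (@eigsum_mono K M Tw (fun mu => mu \in L') _ (F y) _ (hL' y hy)) => mu hmu; by rewrite mem_cat hmu orbT.
Qed.

Theorem proposition4p8 (K : numClosedFieldType)
    (V1 : lmodType K) (vac1 om1 : V1) (Y1 : V1 -> int -> V1 -> V1) (c1 : K)
    (V2 : lmodType K) (vac2 om2 : V2) (Y2 : V2 -> int -> V2 -> V2) (c2 : K)
    (hV1 : is_VOA vac1 om1 Y1 c1) (hV2 : is_VOA vac2 om2 Y2 c2)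
    (W : lmodType K) (YW1 : V1 -> int -> W -> W) (YW2 : V2 -> int -> W -> W)
    (hW : weak_tensor_module vac1 vac2 Y1 Y2 YW1 YW2)
    (W2 : lmodType K) (Y22 : V2 -> int -> W2 -> W2)
    (hW2 : weak_module vac2 Y2 Y22) (hfg : fin_generated Y22) :
  weak_module_on vac1 Y1 (HomV Y22 YW2) (Yhom (W2:=W2) YW1) /\
  (module_on vac2 om2 Y2 (fun _ => True) Y22 ->
   graded_on (fun _ => True) (fun w => YW1 om1 1 w + YW2 om2 1 w) ->
   (semisimple_on (fun _ => True) (YW1 om1 1) \/
    semisimple_on (fun _ => True) (YW2 om2 1)) ->
   module_on vac1 om1 Y1 (HomV Y22 YW2) (Yhom (W2:=W2) YW1)).
Proof.
case: hW => wm1 wm2 hcomm.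
case: wm1 => _ [_ [lin1 [lin1u [tr1 [vac1h jac1]]]]].
case: wm2 => _ [_ [lin2 _]].
case: hV1 => [[_ [_ [_ [_ [tr11 _]]]]] _].
case: hfg => gs hgs.
have L1 u n : islin (YW1 u n) by move=> a x y; apply: lin1.
have L2 u n : islin (YW2 u n) by move=> a x y; apply: lin2.
have trunc : forall u f, HomV Y22 YW2 f ->
    exists N : int, forall n, N <= n -> forall w, YW1 u n (f w) = 0.
  move=> u f [hf hfY].
  have [k hk] : exists k : nat, forall w, w \in gs ->
      forall n : int, k%:Z <= n -> YW1 u n (f w) = 0.
    apply: (seq_max (P := fun k w => forall n : int, k%:Z <= n -> YW1 u n (f w) = 0)).
      move=> k k' x hkk' h n hn; apply: h; lia.
    move=> w _; have [N hN] := tr1 u (f w) I.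
    by exists `|N|%N => n hn; apply: hN; lia.
  exists k%:Z => n hn w; move: w n hn.
  apply: (hgs (fun w => forall n : int, k%:Z <= n -> YW1 u n (f w) = 0)).
  - split.
      by move=> n _; rewrite (lin0 hf) (lin0 (L1 u n)).
    by move=> a x y hx hy n hn; rewrite hf (L1 u n) hx // hy // scaler0 addr0.
  - by move=> v p w hw n hn; rewrite hfY hcomm hw // (lin0 (L2 v p)).
  - by [].
have P1 : weak_module_on vac1 Y1 (HomV Y22 YW2) (Yhom (W2:=W2) YW1).
  have sub : subspace (HomV Y22 YW2).
    split.
      split => [a x y|v n w]; rewrite !fapp0; first by rewrite scaler0 addr0.
      by rewrite (lin0 (L2 v n)).
    move=> a f g [hf hfY] [hg hgY]; split => [b x y|v n w]; rewrite !fapp_lin.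
      rewrite hf hg !scalerDr !scalerA (mulrC a b) [LHS]addrACA //.
    by rewrite hfY hgY (L2 v n).
  split => //.
  split.
    move=> u n f [hf hfY]; split => [a x y|v p w]; rewrite /Yhom.
      by rewrite hf (L1 u n).
    by rewrite hfY hcomm.
  split.
    move=> u n a f g _ _; apply: boolp.funext => w.
    by rewrite /Yhom !fapp_lin (L1 u n).
  split.
    move=> u u' n a f _; apply: boolp.funext => w.
    by rewrite /Yhom fapp_lin lin1u.
  split.
    move=> u f hf; have [N hN] := trunc u f hf.
    by exists N => n hn; apply: boolp.funext => w; rewrite fapp0 /Yhom hN.
  split.
    move=> n f _; apply: boolp.funext => w; rewrite /Yhom vac1h //.
    by case: (n == -1).
  move=> u v f l m n hf.
  have [Nv hNv] := trunc v f hf.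
  have [Nu hNu] := trunc u f hf.
  have [Nuv hNuv] := tr11 u v I.
  pose T0 := (`|Nv - n| + `|Nu - m| + `|Nuv - l|)%N.
  exists T0 => N hN.
  apply: boolp.funext => w; rewrite !fct_sumE /=.
  pose A := fun i : nat => ((-1) ^+ i * binz K l i) *:
        (YW1 u (m + l - i%:Z) (YW1 v (n + i%:Z) (f w))
         - (-1) ^+ `|l|%N *: YW1 v (n + l - i%:Z) (YW1 u (m + i%:Z) (f w))).
  pose B := fun i : nat =>
        binz K m i *: YW1 (Y1 u (l + i%:Z) v) (m + n - i%:Z) (f w).
  have hA : forall i, (T0 <= i)%N -> A i = 0.
    move=> i hi; rewrite /A hNv; last by rewrite /T0 in hi; lia.
    rewrite hNu; last by rewrite /T0 in hi; lia.
    by rewrite (lin0 (L1 u _)) (lin0 (L1 v _)) scaler0 subrr scaler0.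
  have hB : forall i, (T0 <= i)%N -> B i = 0.
    move=> i hi; rewrite /B hNuv; last by rewrite /T0 in hi; lia.
    have L1u0 : islin (fun u0 => YW1 u0 (m + n - i%:Z) (f w)).
      by move=> a x y; apply: lin1u.
    by have := lin0 L1u0 => /= ->; rewrite scaler0.
  have [N1 hN1] := jac1 u v (f w) l m n I.
  have hM : (T0 <= maxn N1 N)%N by apply: leq_trans hN (leq_maxr _ _).
  have e := hN1 _ (leq_maxl N1 N).
  transitivity (\sum_(i < N) A i); first by apply: eq_bigr.
  transitivity (\sum_(i < N) B i); last by apply: eq_bigr.
  rewrite (sum_stab hA hN) (sum_stab hB hN) -(sum_stab hA hM) -(sum_stab hB hM).
  exact: e.
split; first exact: P1.
move=> [_ gr2] grW _; split; first exact: P1.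
have [subH [clH [linfH _]]] := P1.
case: gr2 => ss2 _ _.
case: grW => ssW fdW trW.
have aux : forall gs0 : seq W2, exists tq : seq (K * W2),
    (forall q, q \in tq -> Y22 om2 1 q.2 = q.1 *: q.2) /\
    (forall g, g \in gs0 -> exists sg : seq (K * W2),
        (forall q, q \in sg -> q \in tq) /\ g = \sum_(q <- sg) q.2).
  elim => [|g gs0 [tq [h1 h2]]].
    by exists [::]; split => q; rewrite in_nil.
  have [sg [hsg eg]] := ss2 g I.
  exists (sg ++ tq); split.
    move=> q; rewrite mem_cat => /orP [hq|hq]; last exact: h1.
    by have [_ ->] := hsg q hq.
  move=> g'; rewrite in_cons => /orP [/eqP ->|hg'].
    by exists sg; split => // q hq; rewrite mem_cat hq.
  have [sg' [hs' e']] := h2 g' hg'.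
  by exists sg'; split => // q hq; rewrite mem_cat hs' ?orbT.
have [tq [htq hgen0]] := aux gs.
have hgen : forall S : W2 -> Prop, subspace S ->
    (forall u n w, S w -> S (Y22 u n w)) ->
    (forall q, q \in tq -> S q.2) -> forall w, S w.
  move=> S hS hcl hq; apply: hgs => // g hg.
  have [sg [hsg ->]] := hgen0 g hg.
  by apply: subspace_sum => // q hq'; apply: hq; exact: hsg.
have kerS : forall g, HomV Y22 YW2 g ->
    (forall q, q \in tq -> g q.2 = 0) -> g = 0.
  move=> g [hg hgY] h0; apply: boolp.funext => w; rewrite fapp0; move: w.
  apply: (hgen (fun w => g w = 0)).
  - split; first exact: (lin0 hg).
    by move=> a x y hx hy; rewrite hg hx hy scaler0 addr0.
  - by move=> u n w hw; rewrite hgY hw (lin0 (L2 u n)).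
  - exact: h0.
have L2e : forall g q, HomV Y22 YW2 g -> q \in tq ->
    YW2 om2 1 (g q.2) = q.1 *: g q.2.
  by move=> g q [hg hgY] hq; rewrite -hgY htq // (linZ hg).
split.
- move=> f hf0; have [hf hfY] := hf0.
  have e1 : forall q, q \in tq -> eigsum (YW1 om1 1) (fun _ => True) (f q.2).
    move=> q hq; apply: (eig_split (T2 := YW2 om2 1) (mu := q.1)).
    + exact: L1.
    + exact: L2.
    + by move=> w; rewrite hcomm.
    + exact: L2e hf0 hq.
    + exact: ssW.
  have [Lam hLam] := collect (F := fun q : K * W2 => f q.2) e1.
  pose Lu := undup Lam.
  have allw : forall w, eigsum (YW1 om1 1) (fun mu => mu \in Lu) (f w).
    apply: (hgen (fun w => eigsum (YW1 om1 1) (fun mu => mu \in Lu) (f w))).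
    + split; first by rewrite (lin0 hf); exact: eigsum0.
      move=> a x y hx hy; rewrite hf; apply: eigsum_add => //.
      exact: eigsum_scale (L1 _ _) hx.
    + move=> u n w hw; rewrite hfY; apply: eigsum_map hw; first exact: L2.
      by move=> x; rewrite hcomm.
    + move=> q hq; move: (hLam q hq); apply: eigsum_mono => mu.
      by rewrite mem_undup.
  exists [seq (lam, fun w => Pop (YW1 om1 1) Lu lam (f w)) | lam <- Lu]; split.
    move=> p /mapP [lam hlam ->] /=; split.
      split => [a x y|v n w].
        by rewrite hf (Pop_lin _ _ (L1 om1 1)).
      rewrite hfY (Pop_comm _ _ _ (L2 v n)) //.
    apply: boolp.funext => w; rewrite /Yhom fappZ.
    exact: ((lagrange (L1 om1 1) (undup_uniq Lam) (allw w)).2 lam hlam).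
  rewrite big_map; apply: boolp.funext => w; rewrite fct_sumE /=.
  exact: (lagrange (L1 om1 1) (undup_uniq Lam) (allw w)).1.
- move=> h.
  apply: (fin_dim_crit (phi := fun (q : K * W2) (g : W2 -> W) => g q.2) (I := tq)).
  + split.
      split; first exact: subH.1.
      apply: boolp.funext => w.
      by rewrite /Yhom fappZ !fapp0 (lin0 (L1 om1 1)) scaler0.
    move=> a x y [hx ex] [hy ey]; split; first exact: subH.2.
    by rewrite linfH // ex ey scalerA mulrC -scalerA -scalerDr.
  + by move=> q _ a x y.
  + move=> q hq; have [t ht] := fdW (h + q.1).
    exists t => g [hg eg]; apply: ht; split => //.
    have := congr1 (fun F => F q.2) eg; rewrite /= fappZ /Yhom => ->.
    by rewrite (L2e g q hg hq) scalerDl.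
  + by move=> g [hg _] h0; exact: kerS hg h0.
- move=> h.
  have [k hk] : exists k : nat, forall q, q \in tq -> forall n : int,
      n <= - k%:Z -> forall x, YW1 om1 1 x + YW2 om2 1 x = (h + q.1 + n%:~R) *: x ->
      x = 0.
    apply: (seq_max (P := fun k q => forall n : int, n <= - k%:Z -> forall x,
      YW1 om1 1 x + YW2 om2 1 x = (h + q.1 + n%:~R) *: x -> x = 0)).
      by move=> k k' q hkk' H n hn; apply: H; lia.
    move=> q _; have [N hN] := trW (h + q.1).
    by exists `|N|%N => n hn x ex; apply: (hN n _ x I ex); lia.
  exists (- k%:Z) => n hn g hg eg; apply: kerS => // q hq.
  apply: (hk q hq n hn).
  have := congr1 (fun F => F q.2) eg; rewrite /= fappZ /Yhom => ->.
  by rewrite (L2e g q hg hq) -scalerDl addrAC.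
Qed.
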